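(* Let $r \le n$ and $p \ge r$ be positive integers. Let $V \in \mathbb{R}^{n \times r}$, let $W \in \mathbb{R}^{n \times p}$, let $h: \mathbb{R}^{r} \to \mathbb{R}^{p}$ be any (feature) map, and define the correction map $H: \mathbb{R}^r \to \mathbb{R}^n$ by $H(z) = W h(z)$. Consider the set $$\mathcal{M}_r(V, H) = \{ V z + W h(z) \,:\, z \in \mathbb{R}^{r} \} \subset \mathbb{R}^{n}.$$ Let $Q = [q^{(1)}, \dots, q^{(k)}] \in \mathbb{R}^{n \times k}$ be a data matrix with singular values $\sigma_1 \ge \sigma_2 \ge \dots \ge \sigma_{\ell}$, where $\ell = \min(n, k)$ and $\ell \ge r$. Then $$\sum_{i=1}^{k} \min_{\hat{q}^{(i)} \in \mathcal{M}_r(V,H)} \|\hat{q}^{(i)} - q^{(i)}\|_2^2 \;\ge\; \sum_{i = p + r + 1}^{\ell} \sigma_i^2 ,$$ where the minimum is understood as an infimum and the right-hand side is an empty sum (equal to $0$) if $p + r \ge \ell$.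
   Context: $\|\cdot\|_2$ denotes the Euclidean norm. The singular values of $Q$ are listed in non-increasing order. In the paper's typical application $h$ is the quadratic feature map $z \mapsto (z_1z_1, z_1z_2, \dots, z_1 z_r, z_2 z_2, \dots, z_r z_r)^\top$ with $p = r(r+1)/2$, but the statement holds for an arbitrary map $h:\mathbb{R}^r\to\mathbb{R}^p$. *)

(* Defs.v *)
From HB Require Import structures.
From mathcomp Require Import all_boot all_order all_algebra.
From mathcomp Require Import all_classical all_reals.
Set Implicit Arguments. Unset Strict Implicit. Unset Printing Implicit Defensive.
Import Order.TTheory GRing.Theory Num.Theory.
Local Open Scope ring_scope.
Local Open Scope classical_set_scope.

Definition sqnorm (R : realType) (n : nat) (x : 'cV[R]_n) : R :=
  \sum_(i < n) (x i 0) ^+ 2.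

Definition Mset (R : realType) (n r p : nat) (V : 'M[R]_(n, r)) (W : 'M[R]_(n, p))
  (h : 'cV[R]_r -> 'cV[R]_p) : set 'cV[R]_n :=
  [set V *m z + W *m h z | z in [set: 'cV[R]_r]].

Definition dist2_to (R : realType) (n : nat) (M : set 'cV[R]_n) (q : 'cV[R]_n) : R :=
  inf [set sqnorm (qh - q) | qh in M].

Definition orthogonal_mx (R : realType) (m : nat) (U : 'M[R]_m) : Prop :=
  U^T *m U = 1%:M.

(* s_0 >= s_1 >= ... >= s_(l-1) >= 0 (0-indexed, l = minn n k) are the singular
   values of Q : 'M_(n,k): there is an SVD Q = U * diag(s) * X^T with U, X
   orthogonal and diag(s) the n x k rectangular diagonal matrix. *)
Definition singular_values (R : realType) (n k : nat) (Q : 'M[R]_(n, k))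
  (s : nat -> R) : Prop :=
  (forall i, (i < minn n k)%N -> 0 <= s i) /\
  (forall i j, (i <= j)%N -> (j < minn n k)%N -> s j <= s i) /\
  exists (U : 'M[R]_n) (X : 'M[R]_k),
    orthogonal_mx U /\ orthogonal_mx X /\
    Q = U *m (\matrix_(i < n, j < k) (if (i : nat) == j then s i else 0)) *m X^T.

(* Main.v *)
Require Import Defs.
From HB Require Import structures.
From mathcomp Require Import all_boot all_order all_algebra.
From mathcomp Require Import all_classical all_reals.
From mathcomp Require Import ring lra.
Import Order.TTheory GRing.Theory Num.Theory.
Local Open Scope ring_scope.

Section Aux.
Variable R : realType.

Lemma sqnormE n (x : 'cV[R]_n) : sqnorm x = (x^T *m x) 0 0.
Proof. by rewrite /sqnorm mxE; apply: eq_bigr => i _; rewrite mxE expr2. Qed.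

Lemma sqnorm_ge0 n (x : 'cV[R]_n) : 0 <= sqnorm x.
Proof. by apply: sumr_ge0 => i _; apply: sqr_ge0. Qed.

Lemma sqnormN n (x : 'cV[R]_n) : sqnorm (- x) = sqnorm x.
Proof. by rewrite /sqnorm; apply: eq_bigr => i _; rewrite mxE sqrrN. Qed.

Lemma sqnorm_pyth n (a b : 'cV[R]_n) : a^T *m b = 0 ->
  sqnorm (a + b) = sqnorm a + sqnorm b.
Proof.
move=> hab; have tD : (a + b)^T = a^T + b^T by apply/matrixP=> i j; rewrite !mxE.
rewrite !sqnormE tD mulmxDl !mulmxDr hab.
have -> : b^T *m a = 0 by rewrite -[a]trmxK -trmx_mul hab trmx0.
by rewrite addr0 add0r !mxE.
Qed.

Lemma sum_sqnorm_col n k (M : 'M[R]_(n, k)) :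
  \sum_(j < k) sqnorm (col j M) = \tr (M^T *m M).
Proof.
rewrite /mxtrace; apply: eq_bigr => j _; rewrite /sqnorm mxE.
by apply: eq_bigr => i _; rewrite !mxE expr2.
Qed.

Lemma trM_sq a b (M : 'M[R]_(a, b)) :
  \tr (M *m M^T) = \sum_(i < a) \sum_(j < b) M i j ^+ 2.
Proof.
rewrite /mxtrace; apply: eq_bigr => i _; rewrite mxE.
by apply: eq_bigr => j _; rewrite !mxE expr2.
Qed.

Lemma mulmx_tr_eq0 a b (M : 'M[R]_(a, b)) : M *m M^T = 0 -> M = 0.
Proof.
move=> h; have := trM_sq _ _ M; rewrite h mxtrace0 => /esym /eqP.
rewrite psumr_eq0; last by move=> i _; apply: sumr_ge0 => j _; apply: sqr_ge0.
move=> /allP H; apply/matrixP => i j; rewrite mxE.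
have := H i (mem_index_enum _); rewrite psumr_eq0; last by move=> ? _; apply: sqr_ge0.
by move=> /allP /(_ j (mem_index_enum _)); rewrite sqrf_eq0 => /eqP.
Qed.

End Aux.

Lemma comb (R : realType) n k m (s : nat -> R) (a : 'I_n -> R)
 (s0 : forall i, (i < minn n k)%N -> 0 <= s i)
 (smon : forall i j, (i <= j)%N -> (j < minn n k)%N -> s j <= s i)
 (a01 : forall i, 0 <= a i <= 1)
 (asum : \sum_i a i <= m%:R) :
 \sum_(m <= i < minn n k) s i ^+ 2 <=
   \sum_(i < n) (1 - a i) * (if (i < k)%N then s i ^+ 2 else 0).
Proof.
set e := fun i : 'I_n => if (i < k)%N then s i ^+ 2 else 0.
have lln : (minn n k <= n)%N by rewrite geq_minl.
have -> : \sum_(m <= i < minn n k) s i ^+ 2 =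
          \sum_(i < n) (if (m <= i)%N then e i else 0).
  rewrite big_geq_mkord /= (big_ord_widen_cond n (fun i => m <= i)%N (fun i => s i ^+ 2)) // big_mkcond /=.
  apply: eq_bigr => i _; rewrite /e; have := ltn_ord i.
  case: (m <= i)%N; rewrite ?andbF ?andbT //= leq_min => ->.
  done.
set c := if (m < minn n k)%N then s m ^+ 2 else 0.
have c0 : 0 <= c by rewrite /c; case: ifP => // _; apply: sqr_ge0.
have hlo : forall i : 'I_n, (i < m)%N -> c <= e i.
  move=> i him; rewrite /c /e; case: ifP => hm.
    have hik : (i < k)%N by move: hm; rewrite leq_min => /andP[_]; apply: ltn_trans him.
    rewrite hik; have hs := smon i m (ltnW him) hm; have hs0 := s0 m hm.
    by rewrite ler_sqr ?(le_trans hs0 hs) //; rewrite nnegrE // (le_trans hs0 hs).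
  by case: ifP => _ //; apply: sqr_ge0.
have hhi : forall i : 'I_n, (m <= i)%N -> e i <= c.
  move=> i him; rewrite /c /e; case: ifP => hik //.
  have hil : (i < minn n k)%N by rewrite leq_min ltn_ord hik.
  have hm : (m < minn n k)%N by apply: leq_ltn_trans him hil.
  rewrite hm; have hs := smon m i him hil; have hs0 := s0 i hil.
  by rewrite ler_sqr // nnegrE // (le_trans hs0 hs).
have hsum : \sum_i a i <= \sum_(i < n) ((i < m)%N%:R : R).
  case: (leqP n m) => hnm.
    apply: ler_sum => i _; have := ltn_ord i => hi.
    by rewrite (leq_trans hi hnm); have := a01 i => /andP[].
  have -> : \sum_(i < n) ((i < m)%N%:R : R) = \sum_(i < n | (i < m)%N) (1:R).
    by rewrite [RHS]big_mkcond /=; apply: eq_bigr => i _; case: (i < m)%N.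
  by rewrite -(big_ord_widen n (fun _ => (1:R))) ?(ltnW hnm) // sumr_const card_ord.
apply: (@le_trans _ _ (\sum_(i < n) ((if (m <= i)%N then e i else 0) + c * ((i < m)%N%:R - a i)))).
  rewrite big_split /= lerDl -mulr_sumr sumrB; apply: mulr_ge0 => //.
  by rewrite subr_ge0.
apply: ler_sum => i _; have := a01 i => /andP[ha0 ha1].
case: (leqP m i) => hmi /=.
  have := hhi i hmi; rewrite /e; move: (if _ then _ else _) => x h; nra.
have := hlo i hmi; rewrite /e; move: (if _ then _ else _) => x h; nra.
Qed.

Lemma proj_exists (R : realType) n m (A : 'M[R]_(n, m)) :
  exists t (B : 'M[R]_(t, n)), [/\ (t <= m)%N, exists C : 'M_(t, m), A = B^T *m C
     & (B *m B^T) \in unitmx].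
Proof.
exists (\rank A^T), (row_base A^T); split.
- exact: rank_leq_row.
- exists (A^T *m pinvmx (row_base A^T))^T.
  rewrite -trmx_mul mulmxKpV ?trmxK //.
  by rewrite eq_row_base.
- rewrite -row_free_unit -kermx_eq0; apply/eqP.
  have Bfree := row_base_free A^T.
  move: (row_base A^T) Bfree => B Bfree.
  have hk := mulmx_ker (B *m B^T).
  move: (kermx (B *m B^T)) hk => K hk.
  have hK : K *m B = 0.
    apply: mulmx_tr_eq0.
    by rewrite trmx_mul !mulmxA -(mulmxA K) hk mul0mx.
  apply: (row_free_inj Bfree).
  by rewrite /= hK mul0mx.
Qed.

Theorem proposition4p1 (R : realType) (n r p k : nat)
  (r_gt0 : (0 < r)%N) (r_le_n : (r <= n)%N) (r_le_p : (r <= p)%N)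
  (V : 'M[R]_(n, r)) (W : 'M[R]_(n, p)) (h : 'cV[R]_r -> 'cV[R]_p)
  (Q : 'M[R]_(n, k)) (s : nat -> R)
  (hl : (r <= minn n k)%N)
  (hs : singular_values Q s) :
  \sum_(i < k) dist2_to (Mset V W h) (col i Q)
    >= \sum_(p + r <= i < minn n k) s i ^+ 2.
Proof.
case: hs => s0 [smon [U [X [hU [hX hQ]]]]].
have [t [B [tle [C hA] Gu]]] := proj_exists _ _ _ (row_mx V W).
set G := B *m B^T in Gu.
set P := B^T *m invmx G *m B.
have BP : B *m P = B by rewrite /P !mulmxA -/G mulmxV // mul1mx.
have GT : G^T = G by rewrite /G trmx_mul trmxK.
have PT : P^T = P by rewrite /P !trmx_mul trmxK trmx_inv GT mulmxA.
have PP : P *m P = P.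
  by rewrite {1}/P -!mulmxA BP mulmxA.
have trP : \tr P = t%:R.
  by rewrite /P mxtrace_mulC mulmxA -/G mulmxV // mxtrace1.
set N := 1%:M - P.
have NT : N^T = N by rewrite /N raddfB /= trmx1 PT.
have NN : N *m N = N by rewrite /N mulmxBl mul1mx mulmxBr mulmx1 PP subrr subr0.
have BN : B *m N = 0 by rewrite /N mulmxBr mulmx1 BP subrr.
have col_bd : forall q : 'cV[R]_n, sqnorm (N *m q) <= dist2_to (Mset V W h) q.
  move=> q; apply: lb_le_inf.
    by exists (sqnorm (V *m 0 + W *m h 0 - q)); exists (V *m 0 + W *m h 0) => //; exists 0.
  move=> x [y [z _ <-] <-].
  set c := C *m col_mx z (h z).
  have hy : V *m z + W *m h z = B^T *m c by rewrite /c mulmxA -hA mul_row_col.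
  rewrite hy.
  have -> : B^T *m c - q = B^T *m (c - invmx G *m B *m q) + - (N *m q).
    by rewrite /N mulmxBr mulmxBl mul1mx !mulmxA /P opprB addrA subrK.
  rewrite sqnorm_pyth ?sqnormN ?lerDr ?sqnorm_ge0 //.
  by rewrite mulmxN trmx_mul trmxK -mulmxA -mulmxA (mulmxA B) BN mul0mx mulmx0 oppr0.
clearbody P.
have step : \sum_(i<k) sqnorm (N *m col i Q) <= \sum_(i<k) dist2_to (Mset V W h) (col i Q).
  by apply: ler_sum => i _; exact: col_bd.
apply: le_trans step.
have -> : \sum_(i<k) sqnorm (N *m col i Q) = \tr ((N *m Q)^T *m (N *m Q)).
  by rewrite -sum_sqnorm_col; apply: eq_bigr => i _; rewrite !colE mulmxA.
rewrite trmx_mul NT mulmxA -(mulmxA Q^T N N) NN -mulmxA mxtrace_mulC -mulmxA.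
set D := \matrix_(i, j) _ in hQ.
have QQ : Q *m Q^T = U *m (D *m D^T) *m U^T.
  by rewrite hQ !trmx_mul trmxK !mulmxA -(mulmxA _ X^T X) hX mulmx1.
rewrite QQ.
have -> : \tr (N *m (U *m (D *m D^T) *m U^T)) = \tr (U^T *m N *m U *m (D *m D^T)).
  by rewrite !mulmxA [LHS]mxtrace_mulC !mulmxA.
have -> : U^T *m N *m U = 1%:M - U^T *m P *m U.
  by rewrite /N mulmxBr mulmxBl mulmx1 hU.
set P' := U^T *m P *m U.
have Ediag : forall i j : 'I_n, (D *m D^T) i j =
    if i == j then (if (i < k)%N then s i ^+ 2 else 0) else 0.
  move=> i j; rewrite mxE.
  case: (ltnP i k) => hik.
    rewrite (bigD1 (Ordinal hik)) //= big1 ?addr0.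
      rewrite !mxE /= eqxx.
      case: (eqVneq i j) => [<-|hij]; first by rewrite eqxx expr2.
      have -> : ((j:nat) == i) = false by apply/negbTE; rewrite eq_sym; exact: hij.
      by rewrite mulr0.
    move=> k' hk'; rewrite !mxE.
    have -> : ((i:nat) == k') = false.
      apply/negbTE; apply: contra hk' => /eqP e; apply/eqP/val_inj => /=; by rewrite e.
    by rewrite mul0r.
  rewrite big1; first by case: ifP.
  move=> k' _; rewrite !mxE.
  have -> : ((i:nat) == k') = false.
    by apply/negbTE; rewrite neq_ltn (leq_trans (ltn_ord k') hik) orbT.
  by rewrite mul0r.
have trdiag : forall M : 'M[R]_n, \tr (M *m (D *m D^T)) =
    \sum_(i < n) M i i * (if (i < k)%N then s i ^+ 2 else 0).
  move=> M; rewrite /mxtrace; apply: eq_bigr => i _; rewrite mxE (bigD1 i) //= big1 ?addr0.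
    by rewrite Ediag eqxx.
  by move=> j hj; rewrite Ediag (negbTE hj) mulr0.
rewrite trdiag.
have UUt : U *m U^T = 1%:M := mulmx1C hU.
have P'T : P'^T = P' by rewrite /P' trmx_mul trmx_mul trmxK PT mulmxA.
have P'P' : P' *m P' = P'.
  by rewrite /P' !mulmxA -(mulmxA _ U U^T) UUt mulmx1 -(mulmxA _ P P) PP.
have a_sq : forall i, P' i i = \sum_j P' j i ^+ 2.
  move=> i; have e : P' i i = (P'^T *m P') i i by rewrite P'T P'P'.
  by rewrite e mxE; apply: eq_bigr => j _; rewrite !mxE expr2.
have a01 : forall i, 0 <= P' i i <= 1.
  move=> i; have h0 : 0 <= P' i i by rewrite a_sq; apply: sumr_ge0 => j _; apply: sqr_ge0.
  have h1 : P' i i ^+ 2 <= P' i i.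
    rewrite [X in _ <= X]a_sq (bigD1 i) //= lerDl.
    by apply: sumr_ge0 => j _; apply: sqr_ge0.
  apply/andP; split => //; nra.
have asum : \sum_i P' i i <= (p + r)%:R.
  have -> : \sum_i P' i i = \tr P' by [].
  rewrite /P' -mulmxA mxtrace_mulC -mulmxA UUt mulmx1 trP ler_nat addnC //.
have -> : \sum_(i<n) (1%:M - P') i i * (if (i < k)%N then s i ^+ 2 else 0)
   = \sum_(i<n) (1 - P' i i) * (if (i < k)%N then s i ^+ 2 else 0).
  by apply: eq_bigr => i _; rewrite !mxE eqxx.
exact: comb.
Qed.
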